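(* Let $b,c_1,c_2$ be positive integers, let $\alpha/\beta$ be the right lobster $\mathcal{L}^{c_1,c_2}_b$, and let $T$ be a minimal element of $\mathrm{SET}(\alpha/\beta)$. Then for every column of $\alpha/\beta$, the set of entries of $T$ in the cells of that column is an interval of consecutive integers.
   Context: Rows are numbered from the bottom. The right lobster $\mathcal{L}^{c_1,c_2}_b$ is the skew diagram $\alpha/\beta$ with $\alpha=(b+1+c_2,b+1,b+1+c_1)$, $\beta=(b+1,1,b+1)$: a bottom row of $c_2$ cells in columns $b+2,\ldots,b+1+c_2$, a middle row of $b$ cells in columns $2,\ldots,b+1$, and a top row of $c_1$ cells in columns $b+2,\ldots,b+1+c_1$. $\mathrm{SET}(\alpha/\beta)$ is the set of bijective fillings with $1,\ldots,N$ ($N=b+c_1+c_2$) whose rows increase left to right and columns increase bottom to top. For $1\le i\le N-1$, $\pi_i(T)=T$ if $i+1$ is in a strictly higher row than $i$, $\pi_i(T)=s_i(T)$ (swap $i$ and $i+1$) if $i+1$ is in a strictly lower row than $i$, and $\pi_i(T)=0$ otherwise; the poset order is $T\le T'$ iff $T'$ is obtained from $T$ by a sequence of operators $\pi_i$ (all intermediate results nonzero); minimal elements are those with no strictly smaller element. *)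

(* Defs.v *)
From mathcomp Require Import all_boot.
Set Implicit Arguments. Unset Strict Implicit. Unset Printing Implicit Defensive.

(* Cells are pairs (row, column), rows 1..3 numbered from the bottom,
   columns 1-based as in the paper.  The ambient grid is 'I_4 * 'I_(gridW b c1 c2),
   large enough to contain every cell of the lobster. *)
Definition gridW (b c1 c2 : nat) : nat := b + c1 + c2 + 2.
Definition cell (b c1 c2 : nat) : finType := ('I_4 * 'I_(gridW b c1 c2))%type.

(* membership of (r, c) in the right lobster L^{c1,c2}_b = alpha/beta,
   alpha = (b+1+c2, b+1, b+1+c1), beta = (b+1, 1, b+1) *)
Definition in_lobster (b c1 c2 r c : nat) : bool :=
  [|| (r == 1) && (b + 2 <= c <= b + 1 + c2),
      (r == 2) && (2 <= c <= b + 1)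
    | (r == 3) && (b + 2 <= c <= b + 1 + c1)].

Definition inL b c1 c2 (x : cell b c1 c2) : bool := in_lobster b c1 c2 x.1 x.2.

(* A filling is a finite function on the grid; cells outside alpha/beta carry 0. *)
Definition filling b c1 c2 := {ffun cell b c1 c2 -> nat}.

Definition sizeN (b c1 c2 : nat) : nat := b + c1 + c2.

Definition is_SET b c1 c2 (T : filling b c1 c2) : Prop :=
  (forall x, ~~ inL x -> T x = 0) /\
  [/\ (forall x, inL x -> 1 <= T x <= sizeN b c1 c2),
      (forall x y, inL x -> inL y -> T x = T y -> x = y),
      (forall k, 1 <= k <= sizeN b c1 c2 -> exists x, inL x && (T x == k)),
      (forall x y, inL x -> inL y -> x.1 = y.1 -> (x.2 < y.2)%N -> T x < T y)
    & (forall x y, inL x -> inL y -> x.2 = y.2 -> (x.1 < y.1)%N -> T x < T y)].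

(* row of the cell containing the entry k (0 if there is none) *)
Definition rowof b c1 c2 (T : filling b c1 c2) (k : nat) : nat :=
  if [pick x | inL x && (T x == k)] is Some x then nat_of_ord x.1 else 0.

Definition swapT b c1 c2 (i : nat) (T : filling b c1 c2) : filling b c1 c2 :=
  [ffun x => if T x == i then i.+1 else if T x == i.+1 then i else T x].

(* pi_i T; None stands for 0 *)
Definition pi_op b c1 c2 (i : nat) (T : filling b c1 c2) : option (filling b c1 c2) :=
  if rowof T i < rowof T i.+1 then Some T
  else if rowof T i.+1 < rowof T i then Some (swapT i T)
  else None.

Definition pi_step b c1 c2 (T T' : filling b c1 c2) : Prop :=
  exists2 i, 1 <= i <= (sizeN b c1 c2).-1 & pi_op i T = Some T'.

Inductive set_le b c1 c2 : filling b c1 c2 -> filling b c1 c2 -> Prop :=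
  | set_le_refl T : set_le T T
  | set_le_step T T' T'' : pi_step T T' -> set_le T' T'' -> set_le T T''.

Definition is_minimal_SET b c1 c2 (T : filling b c1 c2) : Prop :=
  is_SET T /\ forall T', is_SET T' -> set_le T' T -> T' = T.

(* Main.v *)
Require Import Defs.
From mathcomp Require Import all_boot.
From mathcomp Require Import zify.

Lemma sig_lt (i u v : nat) : u < v -> ~ (u = i /\ v = i.+1) ->
  (if u == i then i.+1 else if u == i.+1 then i else u) <
  (if v == i then i.+1 else if v == i.+1 then i else v).
Proof. move=> H1 H2; do ![case: eqP => ?] ; lia. Qed.

Lemma sig_inv i v : (if (if v == i then i.+1 else if v == i.+1 then i else v) == i then i.+1
   else if (if v == i then i.+1 else if v == i.+1 then i else v) == i.+1 then i
   else if v == i then i.+1 else if v == i.+1 then i else v) = v.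
Proof.
have n1 : (i.+1 == i) = false by apply/eqP; lia.
have n2 : (i == i.+1) = false by apply/eqP; lia.
case: (v =P i) => [->|a]; first by rewrite n1 eqxx.
case: (v =P i.+1) => [->|c]; first by rewrite eqxx.
by rewrite (introF eqP a) (introF eqP c).
Qed.

Lemma cell_eq b c1 c2 (x y : cell b c1 c2) :
  (x.1 : nat) = y.1 -> (x.2 : nat) = y.2 -> x = y.
Proof. case: x => [x1 x2]; case: y => [y1 y2] /= /val_inj -> /val_inj -> //. Qed.

Lemma inLP b c1 c2 (x : cell b c1 c2) : inL x ->
  [\/ (x.1 : nat) = 1 /\ b + 2 <= x.2 <= b + 1 + c2,
      (x.1 : nat) = 2 /\ 2 <= x.2 <= b + 1
    | (x.1 : nat) = 3 /\ b + 2 <= x.2 <= b + 1 + c1].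
Proof.
rewrite /inL /in_lobster => /or3P [/andP [/eqP -> H]|/andP [/eqP -> H]|/andP [/eqP -> H]].
- by apply: Or31; split.
- by apply: Or32; split.
- by apply: Or33; split.
Qed.

Lemma rowofE b c1 c2 (T : filling b c1 c2) x k :
  (forall x y, inL x -> inL y -> T x = T y -> x = y) ->
  inL x -> T x = k -> rowof T k = x.1.
Proof.
move=> Hinj Hx Hk; rewrite /rowof; case: pickP => [z /andP [Hz /eqP Hzk]|H].
  by rewrite (Hinj z x Hz Hx) // Hzk Hk.
by move: (H x); rewrite Hx Hk eqxx.
Qed.

Lemma discrete (f : nat -> nat) a d : a <= d -> f a < f d ->
  exists i, a <= i < d /\ f i < f i.+1.
Proof.
elim: d => [|d IH] Had Hf.
  have E : a = 0 by lia. by rewrite E ltnn in Hf.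
case: (leqP a d) => Had'.
  case: (ltnP (f a) (f d)) => Hfd.
    by case: (IH Had' Hfd) => i [Hi Hi']; exists i; split => //; lia.
  by exists d; split => //; lia.
have E : a = d.+1 by lia. by rewrite E ltnn in Hf.
Qed.

Lemma swap_nonmin b c1 c2 (T : filling b c1 c2) i p q :
  is_minimal_SET T -> inL p -> inL q -> T p = i -> T q = i.+1 ->
  (p.1 < q.1)%N -> p.2 <> q.2 -> False.
Proof.
move=> [[Hout [Hrange Hinj Hsurj Hrow Hcol]] Hmin] Hp Hq Tp Tq H1 H2.
have Hi1 : 1 <= i by move: (Hrange p Hp); lia.
have HiN : i.+1 <= sizeN b c1 c2 by move: (Hrange q Hq); lia.
set T' := swapT i T.
have T'E : forall x, T' x = (if T x == i then i.+1 else if T x == i.+1 then i else T x).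
  by move=> x; rewrite /T' /swapT ffunE.
have Hpair : forall x y, inL x -> inL y -> T x < T y -> x.1 = y.1 \/ x.2 = y.2 ->
    T' x < T' y.
  move=> x y Hx Hy Hxy Hs; rewrite !T'E; apply: sig_lt => // [[ex ey]].
  have Ex : x = p by apply: Hinj => //; rewrite ex Tp.
  have Ey : y = q by apply: Hinj => //; rewrite ey Tq.
  case: Hs => E.
    by move: E; rewrite Ex Ey => E; rewrite E ltnn in H1.
  by apply: H2; rewrite -Ex -Ey.
have T'p : T' p = i.+1 by rewrite T'E Tp eqxx.
have T'q : T' q = i by rewrite T'E Tq (_ : (i.+1 == i) = false) ?eqxx //; lia.
have HS : is_SET T'.
  split; first by move=> x Hx; rewrite T'E Hout //; do ![case: eqP => ?]; lia.
  split.
  - move=> x Hx; rewrite T'E; move: (Hrange x Hx); do ![case: eqP => ?]; lia.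
  - move=> x y Hx Hy; rewrite !T'E => E; apply: Hinj => //; move: E.
    do ![case: eqP => ?]; lia.
  - move=> k Hk.
    case: (k =P i) => [->|Hki].
      by exists q; rewrite Hq T'q eqxx.
    case: (k =P i.+1) => [->|Hki1].
      by exists p; rewrite Hp T'p eqxx.
    case: (Hsurj k Hk) => x /andP [Hx /eqP Hxk]; exists x.
    by rewrite Hx T'E Hxk (introF eqP Hki) (introF eqP Hki1) eqxx.
  - move=> x y Hx Hy E Hlt; apply: Hpair => //; [exact: Hrow | by left].
  - move=> x y Hx Hy E Hlt; apply: Hpair => //; [exact: Hcol | by right].
have HinjT' : forall x y, inL x -> inL y -> T' x = T' y -> x = y by case: HS => _ [].
have Hop : pi_op i T' = Some T.
  rewrite /pi_op (@rowofE _ _ _ T' q i HinjT' Hq T'q) (@rowofE _ _ _ T' p i.+1 HinjT' Hp T'p).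
  rewrite ltnNge (ltnW H1) /= H1; congr Some.
  apply/ffunP => x; rewrite /swapT ffunE !T'E.
  exact: sig_inv.
have Hle : set_le T' T.
  apply: set_le_step (set_le_refl T); exists i => //; lia.
have := Hmin T' HS Hle => E.
by move: T'p; rewrite E Tp; lia.
Qed.

Theorem lemma5p5 (b c1 c2 : nat) (T : filling b c1 c2) :
  0 < b -> 0 < c1 -> 0 < c2 ->
  is_minimal_SET T ->
  forall x y : cell b c1 c2, inL x -> inL y -> x.2 = y.2 ->
  forall m, T x <= m <= T y ->
  exists z : cell b c1 c2, [/\ inL z, z.2 = x.2 & T z = m].
Proof.
move=> hb hc1 hc2 Hm x y Hx Hy Exy m Hm'.
have HS := Hm.1; case: HS => Hout [Hrange Hinj Hsurj Hrow Hcol].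
have Ec : (x.2 : nat) = y.2 by rewrite Exy.
case: (eqVneq x y) => [Exy'|Hne].
  by exists x; split => //; rewrite -Exy' in Hm'; lia.
have Hr1 : (x.1 : nat) <> y.1 by move=> E; move/eqP: Hne; apply; apply: cell_eq.
have key : ((x.1 : nat) = 1 /\ (y.1 : nat) = 3) \/ ((x.1 : nat) = 3 /\ (y.1 : nat) = 1).
  by case: (@inLP _ _ _ _ Hx) => [[a1 a2]|[a1 a2]|[a1 a2]]; case: (@inLP _ _ _ _ Hy) => [[b1 b2]|[b1 b2]|[b1 b2]]; lia.
case: key => [[rx ry]|[rx ry]]; last first.
  have := Hcol y x Hy Hx (esym Exy) ltac:(lia). lia.
suff E : T y = (T x).+1.
  case: (m =P T x) => Em.
    by exists x; split.
  by exists y; split => //; lia.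
case: (ltnP (T x).+1 (T y)) => H; last first.
  have := Hcol x y Hx Hy Exy ltac:(lia). lia.
have rTx : rowof T (T x) = 1 by rewrite (@rowofE _ _ _ T x (T x) Hinj Hx erefl).
have rTy : rowof T (T y) = 3 by rewrite (@rowofE _ _ _ T y (T y) Hinj Hy erefl).
have [i [Hi Hri]] : exists i, T x <= i < T y /\ rowof T i < rowof T i.+1.
  apply: discrete; [lia | by rewrite rTx rTy].
have rgx := Hrange x Hx; have rgy := Hrange y Hy.
have [p /andP [Hp /eqP Tp]] := Hsurj i ltac:(lia).
have [q /andP [Hq /eqP Tq]] := Hsurj i.+1 ltac:(lia).
rewrite (@rowofE _ _ _ T p i Hinj Hp Tp) (@rowofE _ _ _ T q i.+1 Hinj Hq Tq) in Hri.
exfalso; apply: (@swap_nonmin _ _ _ T i p q Hm Hp Hq Tp Tq Hri) => Epq.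
have Ecpq : (p.2 : nat) = q.2 by rewrite Epq.
have [rp rq] : (p.1 : nat) = 1 /\ (q.1 : nat) = 3.
  by case: (@inLP _ _ _ _ Hp) => [[a1 a2]|[a1 a2]|[a1 a2]]; case: (@inLP _ _ _ _ Hq) => [[b1 b2]|[b1 b2]|[b1 b2]]; lia.
case: (ltngtP p.2 x.2) => Hc.
- have := Hrow p x Hp Hx ltac:(apply: ord_inj; lia) Hc. lia.
- have := Hrow y q Hy Hq ltac:(apply: ord_inj; lia) ltac:(lia). lia.
- have Epx : p = x by apply: cell_eq; lia.
  have Eqy : q = y by apply: cell_eq; lia.
  move: Tp Tq; rewrite Epx Eqy; lia.
Qed.
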